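(* The class $c_r$ of relative convex sequences is not closed under addition: for instance the sequences $(\sqrt{|n-3|})_{n\ge1}$ and $(\sqrt{|n-9|})_{n\ge1}$ both belong to $c_r$, but their sum $(\sqrt{|n-3|}+\sqrt{|n-9|})_{n\ge1}$ does not.
   Context: For a real sequence $(x_i)$, $\Delta x_i=x_{i+1}-x_i$. A real sequence $a=(a_i)_{i\ge1}$ is relative convex if there exists a strictly increasing real sequence $(t_i)_{i\ge1}$ such that $(\Delta a_i/\Delta t_i)_{i\ge1}$ is non-decreasing; $c_r$ denotes the class of all relative convex sequences. *)

(* Defs.v *)
From Stdlib Require Import Reals Lra Lia.
Open Scope R_scope.

(* Sequences are functions nat -> R; only indices i >= 1 are relevant
   (the value at index 0 is ignored). *)
Definition seqR := nat -> R.

Definition Delta (x : seqR) (i : nat) : R := x (S i) - x i.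

Definition relative_convex (a : seqR) : Prop :=
  exists t : seqR,
    (forall i : nat, (1 <= i)%nat -> t i < t (S i)) /\
    (forall i : nat, (1 <= i)%nat ->
       Delta a i / Delta t i <= Delta a (S i) / Delta t (S i)).

Definition c_r : seqR -> Prop := relative_convex.

Definition seq_add (a b : seqR) : seqR := fun n => a n + b n.

(* Main.v *)
Require Import Defs.
From Stdlib Require Import Reals Lra Lia.
Open Scope R_scope.

Lemma cr_of_sign (a : seqR) (N : nat) :
  (forall i, (i < N)%nat -> Defs.Delta a i < 0) ->
  (forall i, (N <= i)%nat -> Defs.Delta a i > 0) -> c_r a.
Proof.
  intros Hneg Hpos.
  set (s := fun i : nat => INR i - INR N + /2).
  assert (Hs : forall i, (i < N)%nat -> s i < 0).
  { intros i Hi. unfold s. apply le_INR in Hi. rewrite S_INR in Hi. lra. }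
  assert (Hs' : forall i, (N <= i)%nat -> s i > 0).
  { intros i Hi. unfold s. apply le_INR in Hi. lra. }
  assert (Hd : forall i, Defs.Delta a i <> 0 /\ s i <> 0 /\ Defs.Delta a i / s i > 0).
  { intros i. destruct (Nat.lt_ge_cases i N) as [H|H].
    - pose proof (Hneg i H). pose proof (Hs i H). repeat split; try lra.
      unfold Rdiv. apply Rmult_neg_neg; [lra| apply Rinv_lt_0_compat; lra].
    - pose proof (Hpos i H). pose proof (Hs' i H). repeat split; try lra.
      apply Rdiv_lt_0_compat; lra. }
  set (t := fix t (n : nat) : R := match n with O => 0 | S m => t m + Defs.Delta a m / s m end).
  assert (Ht : forall i, Defs.Delta t i = Defs.Delta a i / s i).
  { intros i. unfold Defs.Delta at 1. simpl. ring. }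
  assert (Hr : forall i, Defs.Delta a i / Defs.Delta t i = s i).
  { intros i. rewrite Ht. destruct (Hd i) as [H1 [H2 _]]. field. split; auto. }
  exists t. split.
  - intros i _. destruct (Hd i) as [_ [_ H3]]. rewrite <- Ht in H3. unfold Defs.Delta in H3. lra.
  - intros i _. rewrite !Hr. unfold s. rewrite S_INR. lra.
Qed.

Lemma sqrt_abs_cr (c : R) (N : nat) : INR N = c ->
  c_r (fun n : nat => sqrt (Rabs (INR n - c))).
Proof.
  intros Hc. apply (cr_of_sign _ N).
  - intros i Hi. unfold Defs.Delta. apply le_INR in Hi. rewrite S_INR in *.
    rewrite !Rabs_left1 by lra.
    assert (sqrt (- (INR i + 1 - c)) < sqrt (- (INR i - c))) by (apply sqrt_lt_1_alt; lra).
    lra.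
  - intros i Hi. unfold Defs.Delta. apply le_INR in Hi. rewrite S_INR in *.
    rewrite !Rabs_right by lra.
    assert (sqrt (INR i - c) < sqrt (INR i + 1 - c)) by (apply sqrt_lt_1_alt; lra).
    lra.
Qed.

Lemma key : sqrt 6 < 1 + sqrt 5.
Proof.
  assert (sqrt 6 < 5/2).
  { rewrite <- (sqrt_square (5/2)) by lra. apply sqrt_lt_1_alt; lra. }
  assert (2 < sqrt 5).
  { rewrite <- (sqrt_square 2) by lra. apply sqrt_lt_1_alt; lra. }
  lra.
Qed.

Theorem corollary2p4 :
  (~ (forall a b : seqR, c_r a -> c_r b -> c_r (seq_add a b))) /\
  c_r (fun n : nat => sqrt (Rabs (INR n - 3))) /\
  c_r (fun n : nat => sqrt (Rabs (INR n - 9))) /\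
  ~ c_r (seq_add (fun n : nat => sqrt (Rabs (INR n - 3)))
                 (fun n : nat => sqrt (Rabs (INR n - 9)))).
Proof.
  assert (A : c_r (fun n : nat => sqrt (Rabs (INR n - 3)))).
  { apply (sqrt_abs_cr _ 3). simpl. lra. }
  assert (B : c_r (fun n : nat => sqrt (Rabs (INR n - 9)))).
  { apply (sqrt_abs_cr _ 9). simpl. lra. }
  assert (C : ~ c_r (seq_add (fun n : nat => sqrt (Rabs (INR n - 3)))
                 (fun n : nat => sqrt (Rabs (INR n - 9))))).
  { intros [t [Hinc Hmon]].
    set (a := seq_add _ _) in *.
    assert (E3 : Defs.Delta a 3 = sqrt 1 + sqrt 5 - sqrt 6).
    { unfold a, Defs.Delta, seq_add. simpl.
      replace (1 + 1 + 1 + 1 - 3) with 1 by lra.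
      replace (1 + 1 + 1 - 3) with 0 by lra.
      replace (1 + 1 + 1 + 1 - 9) with (-5) by lra.
      replace (1 + 1 + 1 - 9) with (-6) by lra.
      rewrite Rabs_R0, Rabs_R1, !Rabs_left by lra. rewrite sqrt_0.
      replace (- -5) with 5 by lra. replace (- -6) with 6 by lra. ring. }
    assert (E8 : Defs.Delta a 8 = sqrt 6 - sqrt 5 - sqrt 1).
    { unfold a, Defs.Delta, seq_add. simpl.
      replace (1 + 1 + 1 + 1 + 1 + 1 + 1 + 1 + 1 - 3) with 6 by lra.
      replace (1 + 1 + 1 + 1 + 1 + 1 + 1 + 1 - 3) with 5 by lra.
      replace (1 + 1 + 1 + 1 + 1 + 1 + 1 + 1 + 1 - 9) with 0 by lra.
      replace (1 + 1 + 1 + 1 + 1 + 1 + 1 + 1 - 9) with (-1) by lra.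
      rewrite Rabs_R0, !Rabs_right by lra. rewrite Rabs_left by lra. rewrite sqrt_0.
      replace (- -1) with 1 by lra. ring. }
    pose proof key. rewrite sqrt_1 in E3, E8.
    assert (P3 : Defs.Delta a 3 / Defs.Delta t 3 > 0).
    { apply Rdiv_lt_0_compat; [lra|]. pose proof (Hinc 3%nat ltac:(lia)). unfold Defs.Delta; lra. }
    assert (P8 : Defs.Delta a 8 / Defs.Delta t 8 < 0).
    { pose proof (Hinc 8%nat ltac:(lia)). unfold Rdiv. apply Rmult_neg_pos.
      lra. apply Rinv_0_lt_compat. unfold Defs.Delta; lra. }
    pose proof (Hmon 3%nat ltac:(lia)). pose proof (Hmon 4%nat ltac:(lia)).
    pose proof (Hmon 5%nat ltac:(lia)). pose proof (Hmon 6%nat ltac:(lia)).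
    pose proof (Hmon 7%nat ltac:(lia)). simpl in *. lra. }
  split; [|auto].
  intros H. apply C. apply H; auto.
Qed.
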